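(* Let $(a(i))_{i\in\mathbb N}$ be a stationary process taking values in a finite set $S=\{s_1,\dots,s_N\}\subset\mathbb R$, $N\ge2$, with $\mathbb E[a(1)]=0$, satisfying: there are $C>0$, $\alpha\in[0,1)$ such that for all $k\in\mathbb N$, $2\le l\le k$ and $i_1\le\dots\le i_k$, $$\max_{j_1,\dots,j_k}\Big|\mathbb P\big(a(i_k)=s_{j_k},\dots,a(i_l)=s_{j_l}\,\big|\,a(i_{l-1})=s_{j_{l-1}},\dots,a(i_1)=s_{j_1}\big)-\mathbb P\big(a(i_k)=s_{j_k},\dots,a(i_l)=s_{j_l}\big)\Big|\le C\alpha^{i_l-i_{l-1}}.$$ Assume in addition that $\mathbb E[a(i_1)\cdots a(i_r)]=0$ for every odd $r\in\mathbb N$ and all $(i_1,\dots,i_r)\in\mathbb N^r$. Then for every $k\in\mathbb N$ there is a constant $C_k$ such that for all $i_1\le\dots\le i_{2k}$, $$\big|\mathbb E[a(i_1)\cdots a(i_{2k})]\big|\le C_k\,\alpha^{\max\{i_{2l}-i_{2l-1}:\,l=1,\dots,k\}}\le C_k\prod_{l=1}^k\big(\alpha^{1/k}\big)^{i_{2l}-i_{2l-1}}.$$ *)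

(* Defs.v *)
(* A stationary finite-valued process is modelled
   elementarily: a sample space Omega, a finitely additive probability P defined
   on all events, and random variables a i : Omega -> R with values in the list S. *)
From Stdlib Require Import Reals List Sorting.Sorted Arith.
Import ListNotations.
Open Scope R_scope.

Section Defs.
Context {Omega : Type}.

Definition fa_prob (P : (Omega -> Prop) -> R) : Prop :=
  (forall A, 0 <= P A) /\
  P (fun _ => True) = 1 /\
  (forall A B : Omega -> Prop, (forall w, A w <-> B w) -> P A = P B) /\
  (forall A B : Omega -> Prop, (forall w, A w -> B w -> False) ->
      P (fun w => A w \/ B w) = P A + P B).

Definition cyl (a : nat -> Omega -> R) (is : list nat) (xs : list R) : Omega -> Prop :=
  fun w => Forall2 (fun i x => a i w = x) is xs.

Definition sumL (l : list R) : R := fold_right Rplus 0 l.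

(* E[ 1_ev * prod_{i in is} a(i) ] for S-valued variables, computed as the sum over
   all value tuples: sum_{x} (prod x) * P(ev /\ a(i_t) = x_t for all t). *)
Fixpoint Eprod_on (P : (Omega -> Prop) -> R) (a : nat -> Omega -> R) (S : list R)
    (is : list nat) (ev : Omega -> Prop) : R :=
  match is with
  | [] => P ev
  | i :: is' => sumL (map (fun s => s * Eprod_on P a S is' (fun w => ev w /\ a i w = s)) S)
  end.

Definition Eprod P a S (is : list nat) : R := Eprod_on P a S is (fun _ => True).

Definition stationary (P : (Omega -> Prop) -> R) (a : nat -> Omega -> R) : Prop :=
  forall (is : list nat) (xs : list R) (h : nat),
    P (cyl a is xs) = P (cyl a (map (fun i => (i + h)%nat) is) xs).

End Defs.

Fixpoint pair_gaps (l : list nat) : list nat :=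
  match l with
  | x :: y :: r => (y - x)%nat :: pair_gaps r
  | _ => []
  end.

Definition maxL (l : list nat) : nat := fold_right Nat.max 0%nat l.
Definition prodL (l : list R) : R := fold_right Rmult 1 l.

(* Main.v *)
Require Import Defs.
From Stdlib Require Import Reals List Sorting.Sorted Arith Lia Lra Classical.
Import ListNotations.
Open Scope R_scope.

Section Aux.
Variable Omega : Type.
Variable P : (Omega -> Prop) -> R.
Variable a : nat -> Omega -> R.
Variable S : list R.

Fixpoint G (g : (Omega -> Prop) -> R) (l : list nat) (ev : Omega -> Prop) : R :=
  match l with
  | [] => g ev
  | i :: l' => sumL (map (fun s => s * G g l' (fun w => ev w /\ a i w = s)) S)
  end.

Fixpoint nest (ev : Omega -> Prop) (l : list nat) (xs : list R) : Omega -> Prop :=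
  match l, xs with
  | i :: l', x :: xs' => nest (fun w => ev w /\ a i w = x) l' xs'
  | _, _ => ev
  end.

Lemma Eprod_on_G : forall l ev, Eprod_on P a S l ev = G P l ev.
Proof.
  induction l; intros; simpl; auto. f_equal. apply map_ext; intro; rewrite IHl; auto.
Qed.

Lemma G_app : forall g l1 l2 ev, G g (l1 ++ l2) ev = G (G g l2) l1 ev.
Proof.
  induction l1; intros; simpl; auto. f_equal. apply map_ext; intro; rewrite IHl1; auto.
Qed.

Lemma sumL_lin : forall (f g : R -> R) c (L : list R),
  sumL (map f L) - c * sumL (map g L) = sumL (map (fun s => f s - c * g s) L).
Proof. induction L; simpl; [ring|]. rewrite <- IHL. ring. Qed.

Lemma G_lin : forall g1 g2 c l ev,
  G g1 l ev - c * G g2 l ev = G (fun e => g1 e - c * g2 e) l ev.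
Proof.
  induction l; intros; simpl; auto. rewrite sumL_lin. f_equal. apply map_ext; intro.
  rewrite <- IHl. ring.
Qed.

Definition T := sumL (map Rabs S).

Lemma T_ge0 : 0 <= T.
Proof. unfold T; induction S; simpl; [lra|]. pose proof (Rabs_pos a0); lra. Qed.

Lemma sumL_abs_bound : forall (f : R -> R) B (L : list R),
  (forall s, In s L -> Rabs (f s) <= Rabs s * B) ->
  Rabs (sumL (map f L)) <= sumL (map Rabs L) * B.
Proof.
  induction L; intros H; simpl.
  - rewrite Rabs_R0; lra.
  - eapply Rle_trans; [apply Rabs_triang|].
    pose proof (H a0 (or_introl eq_refl)).
    assert (Rabs (sumL (map f L)) <= sumL (map Rabs L) * B) by (apply IHL; intros; apply H; simpl; auto).
    lra.
Qed.

Lemma Gbound : forall g K l ev, 0 <= K ->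
  (forall xs, length xs = length l -> (forall z, In z xs -> In z S) ->
     Rabs (g (nest ev l xs)) <= K) ->
  Rabs (G g l ev) <= T ^ (length l) * K.
Proof.
  intros g K l; induction l; intros ev HK H; simpl.
  - rewrite Rmult_1_l. apply (H []); simpl; auto. intros z [].
  - rewrite Rmult_assoc. unfold T. apply sumL_abs_bound. intros s Hs.
    rewrite Rabs_mult. apply Rmult_le_compat_l; [apply Rabs_pos|].
    apply IHl; auto. intros xs Hl Hin. apply (H (s :: xs)); simpl; auto.
    intros z [<-|Hz]; auto.
Qed.

Lemma Dbound : forall r ev1 ev2 c K, 0 <= K ->
  (forall ys, length ys = length r -> (forall z, In z ys -> In z S) ->
     Rabs (P (nest ev1 r ys) - c * P (nest ev2 r ys)) <= K) ->
  Rabs (G P r ev1 - c * G P r ev2) <= T ^ (length r) * K.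
Proof.
  induction r; intros ev1 ev2 c K HK H; simpl.
  - rewrite Rmult_1_l. apply (H []); simpl; auto. intros z [].
  - rewrite sumL_lin. rewrite Rmult_assoc. unfold T. apply sumL_abs_bound. intros s Hs.
    replace (s * G P r (fun w : Omega => ev1 w /\ a a0 w = s) -
      c * (s * G P r (fun w : Omega => ev2 w /\ a a0 w = s))) with
      (s * (G P r (fun w : Omega => ev1 w /\ a a0 w = s) -
      c * G P r (fun w : Omega => ev2 w /\ a a0 w = s))) by ring.
    rewrite Rabs_mult. apply Rmult_le_compat_l; [apply Rabs_pos|].
    apply IHr; auto. intros ys Hl Hin. apply (H (s :: ys)); simpl; auto.
    intros z [<-|Hz]; auto.
Qed.

Lemma nest_equiv : forall l xs ev w, length l = length xs ->
  (nest ev l xs w <-> ev w /\ cyl a l xs w).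
Proof.
  induction l; intros xs ev w Hl; destruct xs; simpl in Hl; try lia; simpl.
  - unfold cyl. split; [intros; split; auto|tauto].
  - rewrite IHl by lia. unfold cyl. split.
    + intros [[H1 H2] H3]. split; auto.
    + intros [H1 H2]. inversion H2; subst. tauto.
Qed.

End Aux.

Lemma split_max : forall n (l : list nat), length l = (2 * S n)%nat ->
  exists p i j q, l = p ++ i :: j :: q /\ Nat.even (length p) = true /\
    (j - i)%nat = maxL (pair_gaps l).
Proof.
  induction n; intros l Hl; destruct l as [|x [|y r]]; simpl in Hl; try lia.
  - destruct r; simpl in Hl; try lia. exists [], x, y, []. simpl; split; auto. split; auto. lia.
  - destruct (IHn r ltac:(lia)) as (p & i & j & q & -> & He & Hm).
    simpl. unfold maxL at 1. simpl. fold (maxL (pair_gaps (p ++ i :: j :: q))).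
    rewrite <- Hm.
    destruct (Nat.le_ge_cases (y - x) (j - i)).
    + exists (x :: y :: p), i, j, q. simpl. split; auto. split; auto. lia.
    + exists [], x, y, (p ++ i :: j :: q). simpl. split; auto. split; auto. lia.
Qed.

Lemma len_pg : forall n (l : list nat), length l = (2 * n)%nat -> length (pair_gaps l) = n.
Proof.
  induction n; intros l Hl; destruct l as [|x [|y r]]; simpl in Hl; try lia; auto.
  simpl. rewrite (IHn r); lia.
Qed.

Lemma In_maxL : forall l d, In d l -> (d <= maxL l)%nat.
Proof. induction l; simpl; intros d H; [tauto|]. destruct H as [<-|H]; [lia|]. apply IHl in H. lia. Qed.

Lemma prod_bound : forall beta M l, 0 <= beta <= 1 -> (forall d, In d l -> (d <= M)%nat) ->
  (beta ^ M) ^ (length l) <= prodL (map (fun d => beta ^ d) l).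
Proof.
  induction l as [|a0 l IHl]; intros Hb H; simpl; [lra|].
  assert (beta ^ M <= beta ^ a0).
  { assert (a0 <= M)%nat by (apply H; simpl; auto).
    replace M with (a0 + (M - a0))%nat by lia. rewrite pow_add.
    assert (beta ^ (M - a0) <= 1).
    { rewrite <- (pow1 (M - a0)). apply pow_incr. lra. }
    pose proof (pow_le beta a0 ltac:(lra)). nra. }
  apply Rmult_le_compat; auto.
  - apply pow_le; lra.
  - apply pow_le; apply pow_le; lra.
  - apply IHl; auto. intros; apply H; simpl; auto.
Qed.

Theorem mainTheorem6
  (Omega : Type) (P : (Omega -> Prop) -> R) (a : nat -> Omega -> R)
  (S : list R) (C alpha : R)
  (HP : fa_prob P)
  (HS : NoDup S) (HN : (2 <= length S)%nat)
  (Hval : forall i w, In (a i w) S)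
  (Hstat : stationary P a)
  (Hmean : Eprod P a S [1%nat] = 0)
  (HC : 0 < C) (Ha0 : 0 <= alpha) (Ha1 : alpha < 1)
  (Hmix : forall (p q : list nat) (i j : nat) (xp xq : list R) (x y : R),
      Sorted le (p ++ i :: j :: q) ->
      length p = length xp -> length q = length xq ->
      (forall z, In z (xp ++ x :: y :: xq) -> In z S) ->
      0 < P (cyl a (p ++ [i]) (xp ++ [x])) ->
      Rabs (P (fun w => cyl a (j :: q) (y :: xq) w /\ cyl a (p ++ [i]) (xp ++ [x]) w)
              / P (cyl a (p ++ [i]) (xp ++ [x]))
            - P (cyl a (j :: q) (y :: xq)))
        <= C * alpha ^ (j - i))
  (Hodd : forall is : list nat, Nat.odd (length is) = true -> Eprod P a S is = 0) :
  forall k : nat, (1 <= k)%nat ->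
  exists Ck : R, forall is : list nat,
    length is = (2 * k)%nat -> Sorted le is ->
    Rabs (Eprod P a S is) <= Ck * alpha ^ (maxL (pair_gaps is)) /\
    (forall beta : R, 0 <= beta -> beta ^ k = alpha ->
       Ck * alpha ^ (maxL (pair_gaps is))
         <= Ck * prodL (map (fun d => beta ^ d) (pair_gaps is))).
Proof.
  intros k Hk.
  destruct HP as (Pnn & P1 & Pext & Padd).
  assert (Pmono : forall A B : Omega -> Prop, (forall w, A w -> B w) -> P A <= P B).
  { intros A B HAB.
    rewrite (Pext B (fun w => A w \/ (B w /\ ~ A w))).
    - rewrite Padd; [pose proof (Pnn (fun w => B w /\ ~ A w)); lra|]. intros w h1 [_ h2]; tauto.
    - intros w; split; [|intros [h|[h _]]; auto]. intros hb. destruct (classic (A w)); tauto. }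
  assert (Ple1 : forall A, P A <= 1) by (intros; rewrite <- P1; apply Pmono; auto).
  pose proof (T_ge0 S) as HT.
  exists (C * T S ^ (2 * k)). intros is Hlen Hsort.
  assert (HCk : 0 <= C * T S ^ (2 * k)) by (pose proof (pow_le _ (2*k) HT); nra).
  split.
  - destruct k as [|n]; [lia|].
    destruct (split_max n is Hlen) as (p & i & j & q & Heq & Hev & Hm).
    rewrite <- Hm.
    set (M := (j - i)%nat).
    set (l1 := p ++ [i]). set (r := j :: q).
    assert (Hisl : is = l1 ++ r) by (subst l1 r; rewrite Heq, <- app_assoc; auto).
    assert (HE1 : G Omega a S P l1 (fun _ => True) = 0).
    { rewrite <- Eprod_on_G. apply Hodd. subst l1. rewrite length_app. simpl.
      rewrite Nat.add_comm. simpl. rewrite Nat.odd_succ. auto. }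
    assert (HCM : 0 <= C * alpha ^ M) by (pose proof (pow_le alpha M Ha0); nra).
    unfold Eprod. rewrite Eprod_on_G, Hisl, G_app.
    set (c := G Omega a S P r (fun _ => True)).
    replace (G Omega a S (G Omega a S P r) l1 (fun _ => True)) with
      (G Omega a S (G Omega a S P r) l1 (fun _ => True) - c * G Omega a S P l1 (fun _ => True))
      by (rewrite HE1; ring).
    rewrite G_lin.
    assert (Hlens : (length l1 + length r = 2 * Datatypes.S n)%nat) by (rewrite <- length_app, <- Hisl; auto).
    replace (C * T S ^ (2 * Datatypes.S n) * alpha ^ M) with (T S ^ length l1 * (T S ^ length r * (C * alpha ^ M)))
      by (rewrite <- Hlens, pow_add; ring).
    apply Gbound; [pose proof (pow_le _ (length r) HT); nra|].
    intros xs Hxl Hxin.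
    replace (G Omega a S P r (nest Omega a (fun _ => True) l1 xs) -
       c * P (nest Omega a (fun _ => True) l1 xs)) with
      (G Omega a S P r (nest Omega a (fun _ => True) l1 xs) -
       P (nest Omega a (fun _ => True) l1 xs) * G Omega a S P r (fun _ => True)) by (unfold c; ring).
    apply Dbound; auto.
    intros ys Hyl Hyin.
    assert (E1 : P (nest Omega a (nest Omega a (fun _ => True) l1 xs) r ys) =
                 P (fun w => cyl a r ys w /\ cyl a l1 xs w)).
    { apply Pext. intros w. rewrite (nest_equiv Omega P a r ys) by lia. rewrite (nest_equiv Omega P a l1 xs) by lia. tauto. }
    assert (E2 : P (nest Omega a (fun _ => True) l1 xs) = P (cyl a l1 xs)).
    { apply Pext. intros w. rewrite (nest_equiv Omega P a l1 xs) by (symmetry; assumption). tauto. }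
    assert (E3 : P (nest Omega a (fun _ => True) r ys) = P (cyl a r ys)).
    { apply Pext. intros w. rewrite (nest_equiv Omega P a r ys) by (symmetry; assumption). tauto. }
    rewrite E1, E2, E3.
    assert (Hxne : xs <> []) by (intros ->; subst l1; simpl in Hxl; rewrite length_app in Hxl; simpl in Hxl; lia).
    destruct (exists_last Hxne) as (xp & x & ->).
    destruct ys as [|y xq]; [subst r; simpl in Hyl; lia|].
    assert (Hlp : length p = length xp) by (subst l1; rewrite !length_app in Hxl; simpl in Hxl; lia).
    assert (Hlq : length q = length xq) by (subst r; simpl in Hyl; lia).
    assert (Hin : forall z, In z (xp ++ x :: y :: xq) -> In z S).
    { intros z Hz. apply in_app_or in Hz. destruct Hz as [Hz|[<-|Hz]].
      - apply Hxin. apply in_or_app; auto.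
      - apply Hxin. apply in_or_app; simpl; auto.
      - apply Hyin. auto. }
    assert (Hsub : P (fun w => cyl a r (y :: xq) w /\ cyl a l1 (xp ++ [x]) w) <= P (cyl a l1 (xp ++ [x])))
      by (apply Pmono; tauto).
    pose proof (Pnn (fun w => cyl a r (y :: xq) w /\ cyl a l1 (xp ++ [x]) w)).
    pose proof (Pnn (cyl a l1 (xp ++ [x]))) as HA.
    destruct HA as [HA|HA].
    + assert (Hs2 : Sorted le (p ++ i :: j :: q)) by (rewrite <- Heq; auto).
      pose proof (Hmix p q i j xp xq x y Hs2 Hlp Hlq Hin HA) as Hmx.
      fold l1 r M in Hmx.
      set (PA := P (cyl a l1 (xp ++ [x]))) in *.
      set (PBA := P (fun w => cyl a r (y :: xq) w /\ cyl a l1 (xp ++ [x]) w)) in *.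
      set (PB := P (cyl a r (y :: xq))) in *.
      replace (PBA - PA * PB) with (PA * (PBA / PA - PB)) by (field; lra).
      rewrite Rabs_mult, (Rabs_right PA) by lra.
      pose proof (Ple1 (cyl a l1 (xp ++ [x]))). fold PA in H0.
      pose proof (Rabs_pos (PBA / PA - PB)). nra.
    + rewrite <- HA in *.
      replace (P (fun w => cyl a r (y :: xq) w /\ cyl a l1 (xp ++ [x]) w)) with 0 by lra.
      rewrite Rmult_0_l, Rminus_0_r, Rabs_R0. auto.
  - intros beta Hb Hbk.
    apply Rmult_le_compat_l; auto.
    assert (Hb1 : beta <= 1).
    { destruct (Rle_lt_dec beta 1); auto. pose proof (Rlt_pow_R1 beta k r ltac:(lia)). lra. }
    rewrite <- Hbk, <- pow_mult, Nat.mul_comm, pow_mult.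
    rewrite <- (len_pg k is Hlen) at 1.
    apply prod_bound; [lra|]. apply In_maxL.
Qed.
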